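(* Let $X$ be a Tychonoff $\Delta$-space and let $\varphi:X\to Y$ be a closed continuous surjection onto a Tychonoff space $Y$ all of whose fibers $\varphi^{-1}(y)$ are finite. Then $Y$ is a $\Delta$-space.
   Context: A topological space $X$ is a $\Delta$-space if for every decreasing sequence $\{D_n:n\in\omega\}$ of subsets of $X$ with $\bigcap_n D_n=\emptyset$ there is a decreasing sequence $\{V_n:n\in\omega\}$ of open subsets of $X$ with $D_n\subseteq V_n$ for all $n$ and $\bigcap_n V_n=\emptyset$. *)

(* Defs.v *)
From HB Require Import structures.
From mathcomp Require Import all_boot all_order all_algebra.
From mathcomp Require Import all_classical all_reals all_analysis.
Set Implicit Arguments. Unset Strict Implicit. Unset Printing Implicit Defensive.
Local Open Scope classical_set_scope.

Definition tychonoff_space (T : topologicalType) : Prop :=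
  accessible_space T /\ completely_regular_space T.

Definition delta_space (T : topologicalType) : Prop :=
  forall D : nat -> set T,
    (forall n, D n.+1 `<=` D n) ->
    \bigcap_n D n = set0 ->
    exists V : nat -> set T,
      [/\ (forall n, open (V n)),
          (forall n, V n.+1 `<=` V n),
          (forall n, D n `<=` V n) &
          \bigcap_n V n = set0].

Definition closed_map (X Y : topologicalType) (f : X -> Y) : Prop :=
  forall A : set X, closed A -> closed (f @` A).

(* Main.v *)
Require Import Defs.
From mathcomp Require Import all_boot all_order all_algebra.
From mathcomp Require Import all_classical all_reals all_analysis.
Local Open Scope classical_set_scope.

Theorem proposition5p3 (X Y : topologicalType) (phi : X -> Y) :
  tychonoff_space X -> delta_space X ->
  tychonoff_space Y ->
  continuous phi -> closed_map phi -> (forall y : Y, exists x : X, phi x = y) ->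
  (forall y : Y, finite_set (phi @^-1` [set y])) ->
  delta_space Y.
Proof.
move=> _ dX _ _ cl surj _ D Ddec Dempty.
have E0 : \bigcap_n (phi @^-1` D n) = set0.
  apply/seteqP; split => // x Hx.
  have : (\bigcap_n D n) (phi x) by move=> n _; exact: Hx n I.
  by rewrite Dempty.
have [U [Uo Udec DU Uempty]] := dX (fun n => phi @^-1` D n)
  (fun n x Hx => Ddec n _ Hx) E0.
exists (fun n => ~` (phi @` ~` U n)); split.
- move=> n; apply: closed_openC; apply: cl; exact: open_closedC.
- move=> n y Hy [x Hx Hxy]; apply: Hy; exists x => //.
  by move=> Hu; apply: Hx; apply: Udec.
- move=> n y Hy [x Hx Hxy]; apply: Hx; apply: DU; rewrite /= Hxy; exact: Hy.
- apply/seteqP; split => // y Hy.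
  have [x Hx] := surj y.
  have : (\bigcap_n U n) x.
    move=> n _; apply: contrapT => Hn; apply: (Hy n I); by exists x.
  by rewrite Uempty.
Qed.
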